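(* Let $A$ be a nonempty set and let $G\subseteq A^A$ be a group under composition of maps, with identity element $e$. Define the equivalence relation $\sim$ on $A$ by $a\sim b$ iff $e(a)=e(b)$, write $[a]$ for the class of $a$, and for $f\in G$ let $\hat f:A/\sim\,\to A/\sim$ be given by $\hat f([x])=[f(x)]$. Set $\hat G=\{\hat f\mid f\in G\}$. Then $\hat G$ is a permutation group on $A/\sim$, and the map $\rho:G\to\hat G$, $f\mapsto\hat f$, is a group isomorphism.
   Context: $A^A$ denotes the set of all maps $A\to A$. A permutation group on a set $X$ is a group of bijections $X\to X$ under composition. The identity element $e$ of $G$ need not be the identity map of $A$. *)

(* Defs.v *)
Set Implicit Arguments.
Unset Strict Implicit.

Definition comp {A : Type} (f g : A -> A) : A -> A := fun x => f (g x).

(* G (a set of maps A -> A) is a group under composition with identity e.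
   Associativity of composition is automatic. *)
Definition group_of_maps (A : Type) (G : (A -> A) -> Prop) (e : A -> A) : Prop :=
  G e /\
  (forall f g, G f -> G g -> G (comp f g)) /\
  (forall f, G f -> comp e f = f /\ comp f e = f) /\
  (forall f, G f -> exists g, G g /\ comp f g = e /\ comp g f = e).

Definition sim (A : Type) (e : A -> A) (a b : A) : Prop := e a = e b.
Definition cls (A : Type) (e : A -> A) (a : A) : A -> Prop := fun b => sim e b a.

Definition quot (A : Type) (e : A -> A) : Type :=
  { X : A -> Prop | exists a, X = cls e a }.

Definition qcls (A : Type) (e : A -> A) (a : A) : quot e :=
  exist (fun X => exists a', X = cls e a') (cls e a) (ex_intro _ a eq_refl).

Definition is_hat (A : Type) (e : A -> A) (f : A -> A) (F : quot e -> quot e) : Prop :=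
  forall x, F (qcls e x) = qcls e (f x).
Arguments is_hat {A} e f F.

Definition Ghat (A : Type) (G : (A -> A) -> Prop) (e : A -> A) (F : quot e -> quot e) : Prop :=
  exists f, G f /\ is_hat e f F.

Definition bijective (X : Type) (h : X -> X) : Prop :=
  (forall x y, h x = h y -> x = y) /\ (forall y, exists x, h x = y).

Definition perm_group (X : Type) (H : (X -> X) -> Prop) : Prop :=
  (forall h, H h -> bijective h) /\
  H (fun x => x) /\
  (forall h k, H h -> H k -> H (comp h k)) /\
  (forall h, H h -> exists k, H k /\ comp h k = (fun x => x) /\ comp k h = (fun x => x)).

Arguments Ghat {A} G e F.
Arguments qcls {A} e a.
Arguments cls {A} e a.
Arguments sim {A} e a b.
Arguments quot {A} e.
Arguments group_of_maps {A} G e.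

(* Main.v *)
Require Import Defs.
From Stdlib Require Import FunctionalExtensionality PropExtensionality ProofIrrelevance.

Section S.

Context {A : Type} (e : A -> A).

Lemma quot_eq (X Y : quot e) : proj1_sig X = proj1_sig Y -> X = Y.
Proof.
  destruct X as [X pX], Y as [Y pY]; simpl; intros ->.
  f_equal; apply proof_irrelevance.
Qed.

Lemma qcls_eq (x y : A) : e x = e y -> qcls e x = qcls e y.
Proof.
  intro H; apply quot_eq; simpl; unfold cls, sim.
  apply functional_extensionality; intro b; apply propositional_extensionality.
  rewrite H; tauto.
Qed.

Lemma qcls_inv (x y : A) : qcls e x = qcls e y -> e x = e y.
Proof.
  intro H. assert (H1 := f_equal (@proj1_sig _ _) H). simpl in H1.
  assert (H2 := f_equal (fun P => P x) H1). simpl in H2. unfold cls, sim in H2.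
  rewrite <- H2. reflexivity.
Qed.

Lemma quot_rep (X : quot e) : exists a, X = qcls e a.
Proof.
  destruct X as [X [a Ha]]. exists a. apply quot_eq. simpl. exact Ha.
Qed.

Lemma hat_uniq f F F' : is_hat e f F -> is_hat e f F' -> F = F'.
Proof.
  intros H1 H2; apply functional_extensionality; intro X.
  destruct (quot_rep X) as [a ->]. rewrite H1, H2. reflexivity.
Qed.

Lemma hat_comp f g F H : is_hat e f F -> is_hat e g H -> is_hat e (comp f g) (comp F H).
Proof.
  intros H1 H2 x. unfold comp. rewrite H2, H1. reflexivity.
Qed.

Definition hatf (f : A -> A) (X : quot e) : quot e.
Proof.
  refine (exist _ (fun b => exists a, proj1_sig X a /\ e b = e (f (e a))) _).
  destruct X as [X [a Ha]]. simpl. exists (f (e a)).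
  apply functional_extensionality; intro b; apply propositional_extensionality.
  unfold cls, sim. split.
  - intros [a' [Ha' Hb]]. rewrite Hb. rewrite Ha in Ha'. unfold cls, sim in Ha'.
    rewrite Ha'. reflexivity.
  - intros Hb. exists a. rewrite Ha. unfold cls, sim. auto.
Defined.

Lemma hatf_hat f : is_hat e (fun x => f (e x)) (hatf f).
Proof.
  intro x. apply quot_eq. simpl. unfold cls, sim.
  apply functional_extensionality; intro b; apply propositional_extensionality.
  split.
  - intros [a [Ha Hb]]. rewrite Hb, Ha. reflexivity.
  - intros Hb. exists x. auto.
Qed.
End S.

Theorem theorem2p8 (A : Type) (a0 : A) (G : (A -> A) -> Prop) (e : A -> A)
  (HG : group_of_maps G e) :
  (* f-hat is well defined: for each f in G there is exactly one map with F [x] = [f x] *)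
  (forall f, G f -> exists F, is_hat e f F /\ forall F', is_hat e f F' -> F' = F) /\
  (* G-hat is a permutation group on A/~ *)
  perm_group (Ghat G e) /\
  (* rho : f |-> f-hat is a group isomorphism G -> G-hat *)
  (exists rho : (A -> A) -> (quot e -> quot e),
     (forall f, G f -> is_hat e f (rho f)) /\
     (forall f g, G f -> G g -> rho (comp f g) = comp (rho f) (rho g)) /\
     (forall f g, G f -> G g -> rho f = rho g -> f = g) /\
     (forall F, Ghat G e F -> exists f, G f /\ rho f = F)).
Proof.
  destruct HG as [He [Hc [Hid Hinv]]].
  assert (fe : forall f x, G f -> f (e x) = f x).
  { intros f x Gf. destruct (Hid f Gf) as [_ H]. exact (f_equal (fun h => h x) H). }
  assert (ef : forall f x, G f -> e (f x) = f x).
  { intros f x Gf. destruct (Hid f Gf) as [H _]. exact (f_equal (fun h => h x) H). }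
  assert (hh : forall f, G f -> is_hat e f (hatf e f)).
  { intros f Gf x. rewrite (hatf_hat e f x). rewrite fe by exact Gf. reflexivity. }
  assert (hid : is_hat e e (fun X => X)).
  { intro x. apply qcls_eq. rewrite (ef e x He). reflexivity. }
  split; [|split].
  - intros f Gf. exists (hatf e f). split; [exact (hh f Gf)|].
    intros F' H'. exact (hat_uniq _ _ _ _ H' (hh f Gf)).
  - assert (inv : forall h, Ghat G e h -> exists k, Ghat G e k /\
        comp h k = (fun x => x) /\ comp k h = (fun x => x)).
    { intros h [f [Gf Hf]]. destruct (Hinv f Gf) as [g [Gg [H1 H2]]].
      destruct (Hid e He) as [Hee _].
      exists (hatf e g). split; [exists g; split; auto|].
      split.
      - apply (hat_uniq e e); [|exact hid].
        assert (T := hat_comp e _ _ _ _ Hf (hh g Gg)). rewrite H1 in T. exact T.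
      - apply (hat_uniq e e); [|exact hid].
        assert (T := hat_comp e _ _ _ _ (hh g Gg) Hf). rewrite H2 in T. exact T. }
    split; [|split; [|split]].
    + intros h Hh. destruct (inv h Hh) as [k [_ [H1 H2]]]. split.
      * intros x y Hxy. 
        change x with ((fun x => x) x). rewrite <- H2. unfold comp. rewrite Hxy.
        change y with ((fun x => x) y) at 2. rewrite <- H2. reflexivity.
      * intro y. exists (k y). change (comp h k y = y). rewrite H1. reflexivity.
    + exists e. split; auto.
    + intros h k [f [Gf Hf]] [g [Gg Hg]]. exists (comp f g). split; auto.
      apply hat_comp; auto.
    + exact inv.
  - exists (hatf e). split; [|split; [|split]].
    + exact hh.
    + intros f g Gf Gg. apply (hat_uniq e (comp f g)); auto.
      apply hat_comp; auto.
    + intros f g Gf Gg Heq. apply functional_extensionality; intro x.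
      assert (H := f_equal (fun F => F (qcls e x)) Heq). simpl in H.
      rewrite (hh f Gf x), (hh g Gg x) in H.
      apply qcls_inv in H. rewrite ef in H by exact Gf. rewrite ef in H by exact Gg.
      exact H.
    + intros F [f [Gf Hf]]. exists f. split; auto.
      exact (hat_uniq _ _ _ _ (hh f Gf) Hf).
Qed.
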